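(* In the setting below, consider any maximal collection of pairwise disjoint $(\ell+1)$-cycles in $X_1\times\dots\times X_\ell\times Y$ (i.e. tuples $(x_1,\dots,x_\ell,y)$ with $x_i\in X_i$, $y\in Y$, $x_1+\dots+x_\ell+y=0$, pairwise differing in every coordinate), and let $t$ be its size. Then $t\geq\frac{r}{2k\theta}N$.
   Context: Let $p$ be a fixed prime, $n\geq1$, $N=p^n$, $[m]=\{1,\dots,m\}$. For sets $X_1,\dots,X_k\subseteq\mathbb{F}_p^n$, a $k$-cycle is a tuple $(x_1,\dots,x_k)\in X_1\times\dots\times X_k$ with $x_1+\dots+x_k=0$; two cycles are disjoint if they differ in every coordinate. Setting: $k\geq4$, $X_1,\dots,X_k\subseteq\mathbb{F}_p^n$, the number of $k$-cycles in $X_1\times\dots\times X_k$ equals $\delta'N^{k-1}$ with $\delta'>0$, and $\theta\geq 1$ is such that for each $i\in[k]$ every point of $X_i$ occurs as $x_i$ in at most $\theta\delta'N^{k-2}$ $k$-cycles. Put $\alpha=(\theta\delta')^{1/(k-2)}$. For $I\subseteq[k]$ with $1\leq|I|\leq k-2$, an $I$-tuple $(x_i)_{i\in I}\in\prod_{i\in I}X_i$ is bad if at least $2\alpha^{k-|I|-1}N^{k-|I|-1}$ $k$-cycles in $X_1\times\dots\times X_k$ have their $I$-coordinates equal to it. Let $2\leq\ell\leq k-2$ and $0<r<1$. Let $M$ be a collection of $k$-cycles with $|M|\geq r\delta'N^{k-1}$ such that (i) every $(x_1,\dots,x_\ell)\in X_1\times\dots\times X_\ell$ extends to at most $2\alpha^{k-\ell-1}N^{k-\ell-1}$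 $k$-cycles in $M$, and (ii) for every $(x_1,\dots,x_k)\in M$ the $\{\ell+1,\dots,k\}$-tuple $(x_{\ell+1},\dots,x_k)$ is not bad. Let $Y$ be the set of $y\in\mathbb{F}_p^n$ such that the equation $x_1+\dots+x_\ell=-y$ has at most $2\alpha^{\ell-1}N^{\ell-1}$ solutions $(x_1,\dots,x_\ell)\in X_1\times\dots\times X_\ell$. *)

(* Defs.v *)
From HB Require Import structures.
From mathcomp Require Import all_boot all_order all_algebra.
Set Implicit Arguments. Unset Strict Implicit. Unset Printing Implicit Defensive.
Import Order.TTheory GRing.Theory Num.Theory.
Local Open Scope ring_scope.

Notation Vp p n := 'rV['F_p]_n.

(* Families of sets are indexed by nat, 0-based: X 0, ..., X (m-1) play the
   role of X_1, ..., X_m. *)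

Definition cycles (V : finZmodType) (m : nat) (X : nat -> {set V})
  : {set {ffun 'I_m -> V}} :=
  [set x : {ffun 'I_m -> V} | [forall i : 'I_m, x i \in X (nat_of_ord i)]
                              && (\sum_(i < m) x i == 0)].

Definition disjoint_cycles (V : finType) (m : nat) (x y : {ffun 'I_m -> V}) :=
  forall i : 'I_m, x i != y i.

Definition pairwise_disjoint (V : finType) (m : nat) (T : {set {ffun 'I_m -> V}}) :=
  forall x y, x \in T -> y \in T -> x != y -> disjoint_cycles x y.

Definition maximal_disjoint (V : finType) (m : nat)
  (C T : {set {ffun 'I_m -> V}}) :=
  [/\ T \subset C, pairwise_disjoint T &
      forall T' : {set {ffun 'I_m -> V}},
        T \subset T' -> T' \subset C -> pairwise_disjoint T' -> T' = T].

Definition n_ext (V : finZmodType) (k : nat) (X : nat -> {set V})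
  (I : {set 'I_k}) (y : {ffun 'I_k -> V}) : nat :=
  #|[set x in cycles k X | [forall i in I, x i == y i]]|.

(* The I-tuple (y_i)_{i in I} (represented by y, only coordinates in I
   matter) is bad: it lies in prod_{i in I} X_i and at least
   2 alpha^(k-|I|-1) N^(k-|I|-1) k-cycles extend it. *)
Definition bad (R : numDomainType) (V : finZmodType) (k : nat)
  (X : nat -> {set V}) (alpha : R) (N : nat)
  (I : {set 'I_k}) (y : {ffun 'I_k -> V}) : bool :=
  [forall i in I, y i \in X (nat_of_ord i)] &&
  (2 * alpha ^+ (k - #|I| - 1) * (N%:R) ^+ (k - #|I| - 1) <= (n_ext X I y)%:R).

Definition Yset (R : numDomainType) (V : finZmodType) (l : nat)
  (X : nat -> {set V}) (alpha : R) (N : nat) : {set V} :=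
  [set y : V | (#|[set x : {ffun 'I_l -> V} |
                    [forall i : 'I_l, x i \in X (nat_of_ord i)]
                    && (\sum_(i < l) x i == - y)]|%:R
                <= 2 * alpha ^+ (l - 1) * (N%:R) ^+ (l - 1))].

Definition famXY (V : finType) (l : nat) (X : nat -> {set V}) (Y : {set V})
  : nat -> {set V} :=
  fun i => if (i < l)%N then X i else Y.

(* Main.v *)
Require Import Defs.
From HB Require Import structures.
From mathcomp Require Import all_boot all_order all_algebra.
From mathcomp Require Import zify ring.
Import Order.TTheory GRing.Theory Num.Theory.
Set Implicit Arguments. Unset Strict Implicit. Unset Printing Implicit Defensive.

Lemma sum_bool_card (A : finType) (S : {set A}) (P : pred A) :
  (\sum_(x in S) (P x : nat) = #|[set x in S | P x]|)%N.
Proof.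
rewrite -sum1_card [RHS](eq_bigl (fun x => (x \in S) && P x)); last by move=> x; rewrite inE.
rewrite big_mkcondr /=; apply: eq_bigr => x _; by case: (P x).
Qed.

Lemma dc (A B : finType) (S : {set A}) (Q : {set B}) (rel : A -> B -> bool) :
  (forall x, x \in S -> exists2 b, b \in Q & rel x b) ->
  (#|S| <= \sum_(b in Q) #|[set x in S | rel x b]|)%N.
Proof.
move=> H.
under eq_bigr do rewrite -sum_bool_card.
rewrite exchange_big /= -sum1_card.
apply: leq_sum => x xS.
have [b bQ rb] := H x xS.
by rewrite (bigD1 b) //= rb.
Qed.

Lemma card_geq (K l : nat) : (l <= K)%N -> #|[set i : 'I_K | (l <= i)%N]| = (K - l)%N.
Proof.
move=> lK.
rewrite -sum1_card.
rewrite (eq_bigl (fun i : 'I_K => (l <= i)%N)); last by move=> i; rewrite inE.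
rewrite -(big_mkord (fun i => (l <= i)%N) (fun _ => 1%N)).
rewrite (big_cat_nat (leq0n l) lK) /= big_nat_cond big1; last first.
  by move=> i /andP[/andP[_ h]]; rewrite leqNgt h.
rewrite add0n.
rewrite [X in X = _](_ : _ = \sum_(l <= i < K) 1%N); first by rewrite sum_nat_const_nat muln1.
by apply: congr_big_nat => // i /andP[].
Qed.

Definition ext (V : Type) (l K : nat) (a : {ffun 'I_l -> V}) (x : {ffun 'I_K -> V})
  : {ffun 'I_K -> V} :=
  [ffun i : 'I_K => match (insub (val i) : option 'I_l) with Some j => a j | None => x i end].

Lemma ext_w (V : Type) l K (H : (l <= K)%N) (a : {ffun 'I_l -> V}) x (i : 'I_l) :
  ext a x (widen_ord H i) = a i.
Proof. by rewrite ffunE /= valK. Qed.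

Lemma ext_hi (V : Type) l K (a : {ffun 'I_l -> V}) (x : {ffun 'I_K -> V}) (i : 'I_K) :
  ~~ (i < l)%N -> ext a x i = x i.
Proof. by move=> h; rewrite ffunE insubF //; apply: negbTE. Qed.

Lemma ext_inj (V : Type) l K (x : {ffun 'I_K -> V}) (H : (l <= K)%N) :
  injective (fun a : {ffun 'I_l -> V} => ext a x).
Proof.
move=> a b E; apply/ffunP => i.
by rewrite -(ext_w H a x) -(ext_w H b x) E.
Qed.

Lemma sum_ext (V : nmodType) l K (H : (l <= K)%N) (a : {ffun 'I_l -> V}) x :
  (\sum_(i < K) ext a x i = \sum_(i < l) a i + \sum_(i < K | ~~ (i < l)%N) x i)%R.
Proof.
rewrite (bigID (fun i : 'I_K => (i < l)%N)) /= (big_ord_narrow H).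
congr (_ + _)%R; first by apply: eq_bigr => i _; rewrite ext_w.
by apply: eq_bigr => i hi; rewrite ext_hi.
Qed.

Lemma Ymem (R : realDomainType) (V : finZmodType) K l (X : nat -> {set V}) (alpha : R) N
  (x : {ffun 'I_K -> V}) : (l <= K)%N -> x \in cycles K X ->
  ~~ bad X alpha N [set i : 'I_K | (l <= i)%N] x ->
  (\sum_(i < K | ~~ (i < l)%N) x i)%R \in Yset l X alpha N.
Proof.
move=> lK xC nb.
have xC' := xC; rewrite inE in xC'; case/andP: xC' => /forallP xX /eqP xs.
rewrite /bad card_geq // in nb.
have e : (K - (K - l) - 1 = l - 1)%N by lia.
rewrite e in nb.
have hA : [forall i in [set i : 'I_K | (l <= i)%N], x i \in X i].
  by apply/forall_inP => i _; exact: xX.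
rewrite hA /= -ltNge in nb.
rewrite inE; apply: le_trans (ltW nb); rewrite ler_nat /n_ext.
set y := (\sum_(i < K | _) x i)%R.
rewrite -(card_imset _ (ext_inj (x:=x) lK)); apply: subset_leq_card.
apply/subsetP => _ /imsetP[a aS ->].
rewrite inE in aS; case/andP: aS => /forallP aX /eqP asum.
rewrite !inE; apply/andP; split; first (apply/andP; split).
- apply/forallP => i; rewrite ffunE; case: insubP => [j _ vj|_]; last exact: xX.
  by rewrite -vj; exact: aX.
- by rewrite sum_ext // asum addNr.
- by apply/forall_inP => i; rewrite inE => hi; rewrite ext_hi // -leqNgt.
Qed.

Lemma ek_lem (k l : nat) : (2 <= l)%N -> (l <= k - 2)%N -> (k - 2 = (l - 1) + (k - l - 1))%N.
Proof. lia. Qed.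

Lemma nat_aux1 (k l : nat) : (4 <= k)%N -> (l <= k - 2)%N -> (l + 4 <= 2 * k)%N.
Proof. lia. Qed.
Lemma nat_aux2 (k : nat) : (4 <= k)%N -> (k - 1 = (k - 2).+1)%N.
Proof. lia. Qed.

Local Open Scope ring_scope.

Unset Implicit Arguments.

Theorem claim3p4 (R : rcfType) (p n k l : nat) (X : nat -> {set 'rV['F_p]_n})
    (delta' theta alpha r : R) (M : {set {ffun 'I_k -> 'rV['F_p]_n}})
    (T : {set {ffun 'I_l.+1 -> 'rV['F_p]_n}}) :
  prime p -> (1 <= n)%N -> (4 <= k)%N ->
  let N := (p ^ n)%N in
  0 < delta' ->
  (#|cycles k X|%:R = delta' * (N%:R) ^+ (k - 1)) ->
  1 <= theta ->
  (forall (i : 'I_k) (v : 'rV['F_p]_n), v \in X (nat_of_ord i) ->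
     #|[set x in cycles k X | x i == v]|%:R <= theta * delta' * (N%:R) ^+ (k - 2)) ->
  0 < alpha -> alpha ^+ (k - 2) = theta * delta' ->
  (2 <= l)%N -> (l <= k - 2)%N ->
  0 < r -> r < 1 ->
  M \subset cycles k X ->
  r * delta' * (N%:R) ^+ (k - 1) <= #|M|%:R ->
  (forall y : {ffun 'I_k -> 'rV['F_p]_n},
     (forall i : 'I_k, (i < l)%N -> y i \in X (nat_of_ord i)) ->
     #|[set x in M | [forall i : 'I_k, (i < l)%N ==> (x i == y i)]]|%:R
       <= 2 * alpha ^+ (k - l - 1) * (N%:R) ^+ (k - l - 1)) ->
  (forall x, x \in M -> ~~ bad X alpha N [set i : 'I_k | (l <= i)%N] x) ->
  maximal_disjoint (cycles l.+1 (famXY l X (Yset l X alpha N))) T ->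
  r / (2 * k%:R * theta) * N%:R <= #|T|%:R.
Proof.
move=> pp n1 k4 N d0 hC th1 hpt a0 ha l2 lk r0 r1 MC hM hi hbad [TC Tpd Tmax].
have lK : (l <= k)%N by lia.
set Y := Yset l X alpha N.
pose suf (x : {ffun 'I_k -> 'rV['F_p]_n}) := \sum_(i < k | ~~ (i < l)%N) x i.
pose c (x : {ffun 'I_k -> 'rV['F_p]_n}) : {ffun 'I_l.+1 -> 'rV['F_p]_n} :=
  [ffun j : 'I_l.+1 => match (insub (val j) : option 'I_l) with
                        | Some i => x (widen_ord lK i) | None => suf x end].
have c_w : forall x (i : 'I_l), c x (widen_ord (leqnSn l) i) = x (widen_ord lK i).
  by move=> x i; rewrite ffunE /= valK.
have c_max : forall x, c x ord_max = suf x.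
  by move=> x; rewrite ffunE /= insubF // ltnn.
have xX : forall x, x \in M -> forall i : 'I_k, x i \in X i.
  by move=> x /(subsetP MC); rewrite inE => /andP[/forallP h _].
have xS : forall x, x \in M -> \sum_(i < k) x i = 0.
  by move=> x /(subsetP MC); rewrite inE => /andP[_ /eqP].
have split_sum : forall x : {ffun 'I_k -> 'rV['F_p]_n},
    \sum_(i < k) x i = \sum_(i < l) x (widen_ord lK i) + suf x.
  by move=> x; rewrite (bigID (fun i : 'I_k => (i < l)%N)) /= (big_ord_narrow lK).
have sufY : forall x, x \in M -> suf x \in Y.
  by move=> x xM; apply: Ymem => //; [exact: (subsetP MC) | exact: hbad].
have cC : forall x, x \in M -> c x \in cycles l.+1 (famXY l X Y).
  move=> x xM; rewrite inE; apply/andP; split.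
    apply/forallP => j; rewrite /famXY ffunE; case: insubP => [i il vi|nl].
      by rewrite il -vi; exact: xX.
    by rewrite (negbTE nl); exact: sufY.
  rewrite big_ord_recr /= c_max.
  rewrite (eq_bigr (fun i => x (widen_ord lK i))); last by move=> i _; rewrite c_w.
  by rewrite -split_sum xS.
have cover : forall x, x \in M -> exists2 z, z \in T & [exists j, c x j == z j].
  move=> x xM.
  case: (boolP [exists z in T, [exists j, c x j == z j]]) => [/exists_inP[z zT hz]|nz].
    by exists z.
  have H1 : forall z, z \in T -> forall j, c x j != z j.
    move=> z zT j; apply/negP => e; move: nz; apply/negP; rewrite negbK.
    by apply/exists_inP; exists z => //; apply/existsP; exists j.
  exfalso.
  have E := Tmax (c x |: T) (subsetUr _ _).
  have : c x \in T.
    rewrite -E ?setU11 //.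
      apply/subsetP => u; rewrite in_setU1 => /orP[/eqP->|uT]; first exact: cC.
      exact: (subsetP TC).
    move=> u v; rewrite !in_setU1 => /orP[/eqP->|uT] /orP[/eqP->|vT] neq j.
    - by rewrite eqxx in neq.
    - exact: H1.
    - by rewrite eq_sym; exact: H1.
    - exact: Tpd.
  by move=> cT; have := H1 _ cT ord0; rewrite eqxx.
pose B := theta * delta' * N%:R ^+ (k - 2).
pose S z j := [set x in [set x in M | [exists j, c x j == z j]] | c x j == z j].
have zC : forall z, z \in T -> forall j : 'I_l.+1, z j \in famXY l X Y j.
  by move=> z /(subsetP TC); rewrite inE => /andP[/forallP h _].
have bound_lo : forall z, z \in T -> forall i : 'I_l,
    #|S z (widen_ord (leqnSn l) i)|%:R <= B.
  move=> z zT i.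
  have zi : z (widen_ord (leqnSn l) i) \in X (widen_ord lK i).
    by have := zC z zT (widen_ord (leqnSn l) i); rewrite /famXY /= ltn_ord.
  apply: le_trans (hpt (widen_ord lK i) _ zi).
  rewrite ler_nat; apply: subset_leq_card; apply/subsetP => x.
  rewrite !inE => /andP[/andP[xM _] /eqP e].
  apply/andP; split; last by rewrite -c_w e.
  by have := subsetP MC _ xM; rewrite inE.
have bound_hi : forall z, z \in T -> #|S z ord_max|%:R <= 4 * B.
  move=> z zT.
  have zY : z ord_max \in Y by have := zC z zT ord_max; rewrite /famXY /= ltnn.
  pose Sol := [set a : {ffun 'I_l -> 'rV['F_p]_n} |
     [forall i : 'I_l, a i \in X (nat_of_ord i)] && (\sum_(i < l) a i == - z ord_max)].
  pose pre (x : {ffun 'I_k -> 'rV['F_p]_n}) : {ffun 'I_l -> 'rV['F_p]_n} := [ffun i : 'I_l => x (widen_ord lK i)].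
  have h1 := dc (S:=S z ord_max) (Q:=Sol) (rel:=fun x a => pre x == a).
  have h1' : (#|S z ord_max|%:R : R) <=
      \sum_(a in Sol) #|[set x in S z ord_max | pre x == a]|%:R.
    rewrite (_ : \sum_(a in Sol) _ = (\sum_(a in Sol) #|[set x in S z ord_max | pre x == a]|)%:R); last by rewrite natr_sum.
    rewrite ler_nat; apply: h1 => x.
    rewrite !inE => /andP[/andP[xM _] /eqP e].
    exists (pre x) => //.
    rewrite inE; apply/andP; split.
      by apply/forallP => i; rewrite ffunE; exact: xX.
    rewrite -e c_max -addr_eq0.
    rewrite (eq_bigr (fun i => x (widen_ord lK i))); last by move=> i _; rewrite ffunE.
    by rewrite -split_sum xS.
  have h2 : forall a, a \in Sol -> #|[set x in S z ord_max | pre x == a]|%:R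
      <= 2 * alpha ^+ (k - l - 1) * N%:R ^+ (k - l - 1).
    move=> a; rewrite inE => /andP[/forallP aX _].
    have hh := hi (ext a 0).
    refine (le_trans _ (hh _)).
      rewrite ler_nat; apply: subset_leq_card; apply/subsetP => x.
      rewrite !inE => /andP[/andP[/andP[xM _] _] /eqP <-].
      apply/andP; split => //.
      apply/forallP => i; apply/implyP => il.
      rewrite ffunE; case: insubP => [j _ vj|]; last by rewrite il.
      rewrite ffunE; apply/eqP; congr (x _); apply: val_inj; by rewrite /= vj.
    move=> i il; rewrite ffunE; case: insubP => [j _ vj|]; last by rewrite il.
    by rewrite -vj; exact: aX.
  have hSol : #|Sol|%:R <= 2 * alpha ^+ (l - 1) * N%:R ^+ (l - 1).
    by move: zY; rewrite inE.
  apply: le_trans h1' _.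
  apply: le_trans (ler_sum _ h2) _.
  set g := 2 * alpha ^+ (k - l - 1) * N%:R ^+ (k - l - 1).
  rewrite sumr_const -(mulr_natl g #|Sol|).
  have g0 : 0 <= g by rewrite /g mulr_ge0 ?mulr_ge0 ?exprn_ge0 ?ler0n ?ltW.
  apply: le_trans (ler_wpM2r g0 hSol) _.
  have ek : (k - 2 = (l - 1) + (k - l - 1))%N by apply: ek_lem.
  rewrite /g /B -ha ek !exprD.
  move: (alpha ^+ (l - 1)) (alpha ^+ (k - l - 1)) (N%:R ^+ (l - 1) : R) (N%:R ^+ (k - l - 1) : R) => a1 a2 m1 m2.
  rewrite le_eqVlt; apply/orP; left; apply/eqP; ring.
have hM2 : #|M|%:R <= #|T|%:R * ((l%:R + 4) * B).
  have h := dc (S:=M) (Q:=T) (rel:=fun x z => [exists j, c x j == z j]) cover.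
  have h' : (#|M|%:R : R) <= (\sum_(z in T) #|[set x in M | [exists j, c x j == z j]]|)%:R.
    by rewrite ler_nat.
  rewrite natr_sum in h'.
  apply: le_trans h' _.
  rewrite mulr_natl -sumr_const; apply: ler_sum => z zT.
  have h3 := dc (S:=[set x in M | [exists j, c x j == z j]]) (Q:=[set: 'I_l.+1])
     (rel:=fun x j => c x j == z j).
  have h3' : (#|[set x in M | [exists j, c x j == z j]]|%:R : R) <=
       (\sum_(j in [set: 'I_l.+1]) #|S z j|)%:R.
    rewrite ler_nat; apply: h3 => x; rewrite inE => /andP[_ /existsP[j hj]].
    by exists j; rewrite ?inE.
  rewrite natr_sum in h3'.
  apply: le_trans h3' _.
  rewrite (eq_bigl (fun _ => true)); last by move=> j; rewrite inE.
  rewrite big_ord_recr /= mulrDl; apply: lerD; last exact: bound_hi.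
  apply: le_trans (ler_sum _ (fun i _ => bound_lo z zT i)) _.
  by rewrite sumr_const card_ord mulr_natl.
have Np : 0 < N%:R :> R by rewrite ltr0n expn_gt0 prime_gt0.
have eN : N%:R ^+ (k - 1) = N%:R * N%:R ^+ (k - 2) :> R by rewrite nat_aux2 // exprS.
have P0 : 0 < delta' * N%:R ^+ (k - 2) by rewrite mulr_gt0 // exprn_gt0.
have key : r * N%:R <= #|T|%:R * (l%:R + 4) * theta.
  have E1 : r * N%:R * (delta' * N%:R ^+ (k - 2)) = r * delta' * N%:R ^+ (k - 1).
    rewrite eN; move: (N%:R ^+ (k - 2) : R) (N%:R : R) => u v; ring.
  have E2 : #|T|%:R * (l%:R + 4) * theta * (delta' * N%:R ^+ (k - 2))
          = #|T|%:R * ((l%:R + 4) * B).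
    rewrite /B; move: (N%:R ^+ (k - 2) : R) (#|T|%:R : R) (l%:R : R) => u v w; ring.
  by rewrite -(ler_pM2r P0) E1 E2 (le_trans hM hM2).
have lk2 : (l%:R + 4 : R) <= 2 * k%:R.
  by rewrite -(natrD R l 4) -(natrM R 2 k) ler_nat nat_aux1.
have th0 : 0 < theta by apply: lt_le_trans th1; exact: ltr01.
have q0 : 0 < 2 * k%:R * theta by rewrite mulr_gt0 // mulr_gt0 // ltr0n; apply: leq_trans k4.
rewrite mulrAC ler_pdivrMr //.
apply: le_trans key _.
by rewrite -mulrA ler_wpM2l // ler_wpM2r // ltW.
Qed.
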